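(* Let $x\in\mathbb{R}\setminus D$. Then $$d_-T(x)\le \liminf_{n\to\infty} G_n'(x)+1\qquad\text{and}\qquad D^+T(x)\ge \limsup_{n\to\infty} G_n'(x)-1 .$$
   Context: Let $\phi(x)=\operatorname{dist}(x,\mathbb{Z})$ and let $T:\mathbb{R}\to\mathbb{R}$ be the Takagi function $T(x)=\sum_{n=0}^\infty 2^{-n}\phi(2^nx)$. For $n\ge1$ let $D_n=\{k/2^{n-1}:k\in\mathbb{Z}\}$ and let $D=\bigcup_n D_n$ be the set of dyadic rationals. Let $g_k(x)=\operatorname{dist}(x,D_k)$ and $G_n=g_1+\dots+g_n$, so that $T=\sum_{k\ge1}g_k=\lim_n G_n$ pointwise. For $x\notin D$ each $g_k$ is differentiable at $x$ with $g_k'(x)\in\{-1,1\}$, so $G_n'(x)$ is a well-defined integer. For $f:\mathbb{R}\to\mathbb{R}$ the Dini derivatives are $d_-f(x)=\liminf_{h\uparrow0}\frac{f(x+h)-f(x)}{h}$ and $D^+f(x)=\limsup_{h\downarrow0}\frac{f(x+h)-f(x)}{h}$. *)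

(* Defs.v *)
From Stdlib Require Import Reals Lra Lia ZArith.
Open Scope R_scope.

Inductive Rbar : Type := Finite (r : R) | p_infty | m_infty.

Definition Rbar_le (a b : Rbar) : Prop :=
  match a, b with
  | m_infty, _ => True
  | _, p_infty => True
  | Finite r, Finite s => r <= s
  | _, _ => False
  end.

Definition Rbar_plus_R (a : Rbar) (c : R) : Rbar :=
  match a with
  | Finite r => Finite (r + c)
  | p_infty => p_infty
  | m_infty => m_infty
  end.

Definition is_sup_Rbar (E : Rbar -> Prop) (l : Rbar) : Prop :=
  (forall y, E y -> Rbar_le y l) /\
  (forall b, (forall y, E y -> Rbar_le y b) -> Rbar_le l b).
Definition is_inf_Rbar (E : Rbar -> Prop) (l : Rbar) : Prop :=
  (forall y, E y -> Rbar_le l y) /\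
  (forall b, (forall y, E y -> Rbar_le b y) -> Rbar_le b l).

Definition is_liminf_seq (u : nat -> R) (l : Rbar) : Prop :=
  is_sup_Rbar
    (fun y => exists N : nat,
       is_inf_Rbar (fun z => exists n, (N <= n)%nat /\ z = Finite (u n)) y) l.
Definition is_limsup_seq (u : nat -> R) (l : Rbar) : Prop :=
  is_inf_Rbar
    (fun y => exists N : nat,
       is_sup_Rbar (fun z => exists n, (N <= n)%nat /\ z = Finite (u n)) y) l.

Definition is_liminf_left0 (q : R -> R) (l : Rbar) : Prop :=
  is_sup_Rbar
    (fun y => exists delta, 0 < delta /\
       is_inf_Rbar (fun z => exists h, - delta < h < 0 /\ z = Finite (q h)) y) l.
Definition is_limsup_right0 (q : R -> R) (l : Rbar) : Prop :=
  is_inf_Rbar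
    (fun y => exists delta, 0 < delta /\
       is_sup_Rbar (fun z => exists h, 0 < h < delta /\ z = Finite (q h)) y) l.

Definition diff_quot (f : R -> R) (x h : R) : R := (f (x + h) - f x) / h.
Definition is_lower_left_dini (f : R -> R) (x : R) (l : Rbar) : Prop :=
  is_liminf_left0 (diff_quot f x) l.
Definition is_upper_right_dini (f : R -> R) (x : R) (l : Rbar) : Prop :=
  is_limsup_right0 (diff_quot f x) l.

(* phi x = dist(x, Z);  up x is the integer with x < up x <= x + 1,
   so floor x = up x - 1 *)
Definition phi (x : R) : R :=
  Rmin (x - (IZR (up x) - 1)) (IZR (up x) - x).

Definition Dn (n : nat) (y : R) : Prop := exists k : Z, y = IZR k / 2 ^ (n - 1).
Definition dyadic (y : R) : Prop := exists n : nat, (1 <= n)%nat /\ Dn n y.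

(* g_k x = dist(x, D_k) = phi(2^(k-1) x) / 2^(k-1)   (k >= 1) *)
Definition g (k : nat) (x : R) : R := phi (2 ^ (k - 1) * x) / 2 ^ (k - 1).

Fixpoint G (n : nat) (x : R) : R :=
  match n with
  | O => 0
  | S m => G m x + g (S m) x
  end.

(* Main.v *)
Require Import Defs.
From Stdlib Require Import Reals Lra Lia ZArith Classical.
Open Scope R_scope.

Definition flr (w : R) : Z := (up w - 1)%Z.
Definition fr (w : R) : R := w - IZR (flr w).

Lemma flr_spec w : IZR (flr w) <= w < IZR (flr w) + 1.
Proof. unfold flr; rewrite minus_IZR; destruct (archimed w); simpl; lra. Qed.

Lemma flr_unique w (z : Z) : IZR z <= w < IZR z + 1 -> flr w = z.
Proof.
  intros H. unfold flr. rewrite <- (tech_up w (z+1)); [lia| |];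
  rewrite plus_IZR; simpl; lra.
Qed.

Lemma fr_range w : 0 <= fr w < 1.
Proof. unfold fr; pose proof (flr_spec w); lra. Qed.

Lemma phi_fr u : phi u = Rmin (fr u) (1 - fr u).
Proof.
  unfold phi, fr, flr. rewrite minus_IZR. simpl. f_equal; ring.
Qed.

Lemma fr_shift u (z : Z) : fr (u + IZR z) = fr u.
Proof.
  unfold fr. rewrite (flr_unique (u + IZR z) (flr u + z)).
  - rewrite plus_IZR; ring.
  - rewrite plus_IZR; pose proof (flr_spec u); lra.
Qed.

Lemma phi_per u (z : Z) : phi (u + IZR z) = phi u.
Proof. rewrite !phi_fr, fr_shift; reflexivity. Qed.

Lemma phi_lin1 (n : Z) u : IZR n <= u <= IZR n + /2 -> phi u = u - IZR n.
Proof.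
  intros H. rewrite phi_fr. unfold fr. rewrite (flr_unique u n) by lra.
  apply Rmin_left; lra.
Qed.

Lemma phi_lin2 (n : Z) u : IZR n + /2 <= u <= IZR n + 1 -> phi u = IZR n + 1 - u.
Proof.
  intros H. destruct (Req_dec u (IZR n + 1)) as [E|E].
  - subst u. rewrite phi_fr. unfold fr. rewrite (flr_unique _ (n+1)).
    + rewrite plus_IZR. simpl. rewrite Rmin_left; lra.
    + rewrite plus_IZR; simpl; lra.
  - rewrite phi_fr. unfold fr. rewrite (flr_unique u n) by lra.
    rewrite Rmin_right; lra.
Qed.

Lemma fr2 v : fr (2 * v) = (if Rlt_dec (fr v) (/2) then 2 * fr v else 2 * fr v - 1).
Proof.
  pose proof (flr_spec v) as Hs. unfold fr in *.
  destruct (Rlt_dec _ _).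
  - rewrite (flr_unique (2*v) (2 * flr v)). rewrite mult_IZR; simpl; ring.
    rewrite mult_IZR; simpl; lra.
  - rewrite (flr_unique (2*v) (2 * flr v + 1)). rewrite plus_IZR, mult_IZR; simpl; ring.
    rewrite plus_IZR, mult_IZR; simpl; lra.
Qed.

Definition sg (c : R) : R := if Rlt_dec c (/2) then 1 else -1.

Lemma key_phi v w : - (fr (2*v)) / 2 <= w <= (1 - fr (2*v)) / 2 ->
  phi (v + w) - phi v = sg (fr v) * w.
Proof.
  rewrite fr2. unfold sg. pose proof (flr_spec v). pose proof (fr_range v).
  unfold fr in *. destruct (Rlt_dec _ _); intros Hw.
  - rewrite (phi_lin1 (flr v) (v+w)) by lra. rewrite (phi_lin1 (flr v) v) by lra. ring.
  - rewrite (phi_lin2 (flr v) (v+w)) by lra. rewrite (phi_lin2 (flr v) v) by lra. ring.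
Qed.

Fixpoint sumd (f : nat -> R) (n : nat) : R :=
  match n with O => 0 | S k => sumd f k + f k end.


Lemma WB (ep : nat -> R) (ep_pm : forall i, ep i = 1 \/ ep i = -1) d : forall j, ep j = -1 -> exists k, (j <= k <= j + d)%nat /\ ep k = -1 /\
   sumd ep (k+1) <= sumd ep (j+d+1).
Proof.
  induction d as [|d IH]; intros j Hj.
  - exists j. repeat split; try lia; auto. rewrite Nat.add_0_r; lra.
  - destruct (IH j Hj) as [k [Hk [Ek Sk]]].
    destruct (ep_pm (j + S d)%nat) as [E|E].
    + exists k. repeat split; try lia; auto.
      replace (j + S d + 1)%nat with (S (j + d + 1)) by lia. simpl.
      replace (ep (j+d+1)%nat) with 1 by (rewrite <- E; f_equal; lia). lra.
    + exists (j + S d)%nat. repeat split; try lia; auto. lra.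
Qed.

Lemma FW (ep : nat -> R) (ep_pm : forall i, ep i = 1 \/ ep i = -1) d : forall k, ep k = -1 -> ep (k + d)%nat = 1 -> exists p, (k <= p)%nat /\
  ep p = -1 /\ ep (p+1)%nat = 1 /\ sumd ep (p+1) <= sumd ep (k+1).
Proof.
  induction d as [|d IH]; intros k Hk Hd.
  - rewrite Nat.add_0_r in Hd. lra.
  - destruct (ep_pm (k+1)%nat) as [E|E].
    + exists k. repeat split; auto; lra.
    + destruct (IH (k+1)%nat E) as [p [Hp [E1 [E2 S2]]]].
      replace (k + 1 + d)%nat with (k + S d)%nat by lia. exact Hd.
      exists p. repeat split; try lia; auto.
      replace (k+1+1)%nat with (S (k+1)) in S2 by lia. simpl in S2. lra.
Qed.

Lemma LowPat (ep : nat -> R) (ep_pm : forall i, ep i = 1 \/ ep i = -1) : (forall N, exists j, (j >= N)%nat /\ ep j = -1) ->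
  (forall N, exists j, (j >= N)%nat /\ ep j = 1) ->
  forall cc, (forall N, exists n, (n >= N)%nat /\ sumd ep n < cc) ->
  forall N, exists p, (p >= N)%nat /\ ep p = -1 /\ ep (p+1)%nat = 1 /\ sumd ep (p+2) < cc + 1.
Proof.
  intros Hm Hp cc Hc N.
  destruct (Hm N) as [j [Hj Ej]].
  destruct (Hc (S j)) as [n [Hn Sn]].
  destruct (WB ep ep_pm (n - j - 1) j Ej) as [k [Hk [Ek Sk]]].
  replace (j + (n - j - 1) + 1)%nat with n in Sk by lia.
  destruct (Hp k) as [i [Hi Ei]].
  destruct (FW ep ep_pm (i - k) k Ek) as [p [Hpk [E1 [E2 S2]]]].
  replace (k + (i-k))%nat with i by lia; auto.
  exists p. repeat split; try lia; auto.
  replace (p+2)%nat with (S (p+1)) by lia. simpl. lra.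
Qed.

Lemma sumd_opp f n : sumd (fun i => - f i) n = - sumd f n.
Proof. induction n; simpl; [ring| rewrite IHn; ring]. Qed.

Lemma HighPat (ep : nat -> R) : (forall i, ep i = 1 \/ ep i = -1) ->
  (forall N, exists j, (j >= N)%nat /\ ep j = -1) ->
  (forall N, exists j, (j >= N)%nat /\ ep j = 1) ->
  forall cc, (forall N, exists n, (n >= N)%nat /\ sumd ep n > cc) ->
  forall N, exists p, (p >= N)%nat /\ ep p = 1 /\ ep (p+1)%nat = -1 /\ sumd ep (p+2) > cc - 1.
Proof.
  intros Hpm Hm Hp cc Hc N.
  assert (Hn : forall i, - ep i = 1 \/ - ep i = -1) by (intros i; destruct (Hpm i); [right|left]; lra).
  destruct (LowPat (fun i => - ep i) Hn) with (cc := - cc) (N := N) as [p [H1 [H2 [H3 H4]]]].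
  - intros M; destruct (Hp M) as [j [? ?]]; exists j; split; auto; lra.
  - intros M; destruct (Hm M) as [j [? ?]]; exists j; split; auto; lra.
  - intros M; destruct (Hc M) as [n [? ?]]; exists n; split; auto. rewrite sumd_opp; lra.
  - exists p; repeat split; auto; try lra. rewrite sumd_opp in H4; lra.
Qed.

Lemma top_low v : /2 <= fr v < 3/4 ->
  phi (v + - /4) - phi v + (phi (2*v + - /2) - phi (2*v)) / 2 = 0.
Proof.
  intros H. pose proof (flr_spec v). unfold fr in H. set (F := flr v) in *.
  rewrite (phi_lin1 F (v + - /4)) by lra.
  rewrite (phi_lin2 F v) by lra.
  rewrite (phi_lin2 (2*F) (2*v + - /2)) by (rewrite mult_IZR; simpl; lra).
  rewrite (phi_lin1 (2*F+1) (2*v)) by (rewrite plus_IZR, mult_IZR; simpl; lra).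
  rewrite plus_IZR, mult_IZR. simpl. field.
Qed.

Lemma top_high v : /4 <= fr v < /2 ->
  phi (v + /4) - phi v + (phi (2*v + /2) - phi (2*v)) / 2 = 0.
Proof.
  intros H. pose proof (flr_spec v). unfold fr in H. set (F := flr v) in *.
  rewrite (phi_lin2 F (v + /4)) by lra.
  rewrite (phi_lin1 F v) by lra.
  rewrite (phi_lin1 (2*F+1) (2*v + /2)) by (rewrite plus_IZR, mult_IZR; simpl; lra).
  rewrite (phi_lin2 (2*F) (2*v)) by (rewrite mult_IZR; simpl; lra).
  rewrite plus_IZR, mult_IZR. simpl. field.
Qed.

Lemma fr_dbl_le w : fr (2*w) <= 2 * fr w /\ 1 - fr (2*w) <= 2 * (1 - fr w).
Proof. rewrite fr2. pose proof (fr_range w). destruct (Rlt_dec _ _); lra. Qed.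

Lemma fr_pow_le x i d : fr (2^(i+d) * x) <= 2^d * fr (2^i * x) /\
   1 - fr (2^(i+d) * x) <= 2^d * (1 - fr (2^i * x)).
Proof.
  induction d as [|d IH].
  - rewrite Nat.add_0_r; simpl; lra.
  - rewrite Nat.add_succ_r. simpl. rewrite Rmult_assoc.
    destruct (fr_dbl_le (2^(i+d)*x)) as [A B]. split; nra.
Qed.

Lemma pow2_IZR i : exists z, 2^i = IZR z.
Proof.
  induction i as [|i [z Hz]]. exists 1%Z; reflexivity.
  exists (2*z)%Z. rewrite mult_IZR, <- Hz. reflexivity.
Qed.

Lemma exists_big c : 0 < c -> exists d, 1 < 2^d * c.
Proof.
  intros Hc. destruct (pow_lt_1_zero (/2)) with (y := c) as [N HN].
  rewrite Rabs_right; lra. auto.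
  exists N. specialize (HN N (le_n _)). rewrite Rabs_right in HN.
  2: { apply Rle_ge, pow_le; lra. }
  rewrite pow_inv in HN.
  assert (0 < 2^N) by (apply pow_lt; lra).
  apply (Rmult_lt_compat_l (2^N)) in HN; auto.
  rewrite Rinv_r in HN; lra.
Qed.

Definition a (n : nat) (y : R) : R := phi (2 ^ n * y) / 2 ^ n.
Definition ex (x : R) (j : nat) : R := sg (fr (2 ^ j * x)).

Lemma e_pm x j : ex x j = 1 \/ ex x j = -1.
Proof. unfold ex, sg; destruct (Rlt_dec _ _); auto. Qed.

Lemma pow2_pos n : 0 < 2 ^ n.
Proof. apply pow_lt; lra. Qed.

Lemma ND1 x (hx : ~ dyadic x) j : fr (2^j * x) <> 0.
Proof.
  intro H. apply hx. exists (S j). split; [lia|].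
  exists (flr (2^j*x)). rewrite Nat.sub_succ, Nat.sub_0_r.
  unfold fr in H. pose proof (pow2_pos j).
  replace x with ((2^j*x)/2^j) at 1 by (field; lra).
  replace (2^j*x) with (IZR (flr (2^j*x))) at 1 by lra. reflexivity.
Qed.

Lemma inf_minus x (hx : ~ dyadic x) : forall N, exists j, (j >= N)%nat /\ ex x j = -1.
Proof.
  intros N. apply NNPP. intro Hn.
  assert (H1 : forall j, (j >= N)%nat -> fr (2^j*x) < /2).
  { intros j Hj. destruct (Rlt_dec (fr (2^j*x)) (/2)); auto.
    exfalso; apply Hn; exists j; split; auto. unfold ex, sg.
    destruct (Rlt_dec _ _); [contradiction|reflexivity]. }
  assert (H2 : forall d, fr (2^(N+d)*x) = 2^d * fr (2^N*x)).
  { induction d as [|d IH]. rewrite Nat.add_0_r; simpl; ring.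
    rewrite Nat.add_succ_r. simpl. rewrite Rmult_assoc, fr2.
    destruct (Rlt_dec _ _) as [_|n]. rewrite IH; ring.
    exfalso; apply n, H1; lia. }
  pose proof (ND1 x hx N). pose proof (fr_range (2^N*x)).
  destruct (exists_big (fr (2^N*x))) as [d Hd]. lra.
  rewrite <- H2 in Hd. pose proof (fr_range (2^(N+d)*x)). lra.
Qed.

Lemma inf_plus x : forall N, exists j, (j >= N)%nat /\ ex x j = 1.
Proof.
  intros N. apply NNPP. intro Hn.
  assert (H1 : forall j, (j >= N)%nat -> ~ fr (2^j*x) < /2).
  { intros j Hj Hl. apply Hn; exists j; split; auto. unfold ex, sg.
    destruct (Rlt_dec _ _); [reflexivity|contradiction]. }
  assert (H2 : forall d, 1 - fr (2^(N+d)*x) = 2^d * (1 - fr (2^N*x))).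
  { induction d as [|d IH]. rewrite Nat.add_0_r; simpl; ring.
    rewrite Nat.add_succ_r. simpl. rewrite Rmult_assoc, fr2.
    destruct (Rlt_dec _ _) as [r|_]. exfalso; apply (H1 (N+d)%nat); auto; lia.
    replace (2 * 2 ^ d * (1 - fr (2 ^ N * x))) with (2 * (2 ^ d * (1 - fr (2 ^ N * x)))) by ring.
    rewrite <- IH; ring. }
  pose proof (fr_range (2^N*x)).
  destruct (exists_big (1 - fr (2^N*x))) as [d Hd]. lra.
  rewrite <- H2 in Hd. pose proof (fr_range (2^(N+d)*x)). lra.
Qed.

Lemma lin_level x j h : - (fr (2^(S j) * x)) / 2 <= 2^j * h <= (1 - fr (2^(S j) * x)) / 2 ->
  a j (x + h) - a j x = ex x j * h.
Proof.
  intros H. unfold a, ex. rewrite Rmult_plus_distr_l.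
  assert (E : 2 ^ (S j) * x = 2 * (2^j * x)) by (simpl; ring).
  rewrite E in H. pose proof (key_phi (2^j*x) (2^j*h) H) as K.
  pose proof (pow2_pos j).
  replace (phi (2 ^ j * x + 2 ^ j * h) / 2 ^ j - phi (2 ^ j * x) / 2 ^ j)
    with ((phi (2 ^ j * x + 2 ^ j * h) - phi (2 ^ j * x)) / 2 ^ j) by (field; lra).
  rewrite K. field. lra.
Qed.

Lemma g_a j y : g (S j) y = a j y.
Proof. unfold g, a. rewrite Nat.sub_succ, Nat.sub_0_r. reflexivity. Qed.

Lemma deriv_g x (hx : ~ dyadic x) j : derivable_pt_lim (g (S j)) x (ex x j).
Proof.
  intros eps Heps.
  set (c := fr (2^(S j) * x)).
  assert (Hc : 0 < c < 1).
  { pose proof (ND1 x hx (S j)). pose proof (fr_range (2^(S j)*x)). unfold c; lra. }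
  assert (Hr : 0 < Rmin c (1 - c) / 2^(S j)).
  { apply Rdiv_lt_0_compat. apply Rmin_pos; lra. apply pow2_pos. }
  exists (mkposreal _ Hr). intros h hne hlt. simpl in hlt.
  rewrite !g_a, lin_level.
  - replace (ex x j * h / h - ex x j) with 0 by (field; auto). rewrite Rabs_R0; lra.
  - pose proof (pow2_pos j). fold c.
    assert (E : 2^(S j) = 2 * 2^j) by reflexivity. try rewrite E in hlt.
    pose proof (Rmin_l c (1-c)). pose proof (Rmin_r c (1-c)).
    assert (Rabs h * (2 * 2^j) < Rmin c (1-c)).
    { apply (Rmult_lt_compat_r (2*2^j)) in hlt; [|lra].
      replace (Rmin c (1 - c) / (2 * 2 ^ j) * (2 * 2 ^ j)) with (Rmin c (1-c)) in hlt by (field; lra).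
      exact hlt. }
    assert (HH : Rabs (2^j * h) < Rmin c (1-c) / 2).
    { rewrite Rabs_mult, (Rabs_right (2^j)) by lra. lra. }
    apply Rabs_def2 in HH. lra.
Qed.

Lemma deriv_G x (hx : ~ dyadic x) n : derivable_pt_lim (G n) x (sumd (ex x) n).
Proof.
  induction n as [|n IH].
  - exact (derivable_pt_lim_const 0 x).
  - exact (derivable_pt_lim_plus (G n) (g (S n)) x _ _ IH (deriv_g x hx n)).
Qed.

Lemma sum_sumd f n : sum_f_R0 f n = sumd f (S n).
Proof. induction n; simpl in *; [ring| rewrite IHn; ring]. Qed.

Lemma sumd_minus f1 f2 n : sumd (fun j => f1 j - f2 j) n = sumd f1 n - sumd f2 n.
Proof. induction n; simpl; [ring| rewrite IHn; ring]. Qed.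

Lemma sumd_stable f M : (forall j, (j >= M)%nat -> f j = 0) -> forall k, sumd f (M + k) = sumd f M.
Proof.
  intros H k; induction k. rewrite Nat.add_0_r; auto.
  rewrite Nat.add_succ_r. simpl. rewrite IHk, H by lia. ring.
Qed.

Lemma T_diff (T : R -> R)
  (hT : forall y : R, infinite_sum (fun n : nat => phi (2 ^ n * y) / 2 ^ n) (T y))
  x y M : (forall j, (j >= M)%nat -> a j y = a j x) ->
  T y - T x = sumd (fun j => a j y - a j x) M.
Proof.
  intros Hj. set (C := sumd (fun j => a j y - a j x) M).
  apply NNPP; intro Hne.
  set (eps := Rabs (T y - T x - C) / 4).
  assert (He : eps > 0) by (unfold eps; assert (T y - T x - C <> 0) by lra; pose proof (Rabs_pos_lt _ H); lra).
  destruct (hT y eps He) as [N1 H1]. destruct (hT x eps He) as [N2 H2].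
  set (n := (N1 + N2 + M)%nat).
  specialize (H1 n ltac:(unfold n; lia)). specialize (H2 n ltac:(unfold n; lia)).
  unfold Rdist in H1, H2. rewrite sum_sumd in H1, H2.
  change (fun n0 : nat => phi (2 ^ n0 * y) / 2 ^ n0) with (fun n0 => a n0 y) in H1.
  change (fun n0 : nat => phi (2 ^ n0 * x) / 2 ^ n0) with (fun n0 => a n0 x) in H2.
  assert (E : sumd (fun n0 => a n0 y) (S n) - sumd (fun n0 => a n0 x) (S n) = C).
  { rewrite <- sumd_minus. replace (S n) with (M + (N1 + N2 + 1))%nat by (unfold n; lia).
    apply sumd_stable. intros j Hj'. rewrite Hj by auto. ring. }
  assert (Rabs (T y - T x - C) <= Rabs (sumd (fun n0 => a n0 y) (S n) - T y) +
     Rabs (sumd (fun n0 => a n0 x) (S n) - T x)).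
  { rewrite <- E. replace (T y - T x - (sumd (fun n0 : nat => a n0 y) (S n) - sumd (fun n0 : nat => a n0 x) (S n)))
      with (- (sumd (fun n0 => a n0 y) (S n) - T y) + (sumd (fun n0 => a n0 x) (S n) - T x)) by ring.
    eapply Rle_trans; [apply Rabs_triang|]. rewrite Rabs_Ropp. lra. }
  unfold eps in *. lra.
Qed.

Lemma tail_eq x p s (hs : s = 1 \/ s = -1) j : (j >= p + 2)%nat ->
  a j (x + s * / 2^(p+2)) = a j x.
Proof.
  intros Hj. unfold a. destruct (pow2_IZR (j - (p+2))) as [z Hz].
  assert (E : 2^j * (x + s * / 2^(p+2)) = 2^j * x + IZR (if Rlt_dec s 0 then (-z)%Z else z)).
  { replace (2^j) with (2^(p+2) * 2^(j-(p+2))) by (rewrite <- pow_add; f_equal; lia).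
    pose proof (pow2_pos (p+2)).
    destruct (Rlt_dec s 0). rewrite opp_IZR, <- Hz. destruct hs; subst s; [lra|]. field; lra.
    rewrite <- Hz. destruct hs; subst s; [|lra]. field; lra. }
  rewrite E, phi_per. reflexivity.
Qed.

Lemma low_levels x p s (hs : s = 1 \/ s = -1)
  (Hf : if Rlt_dec s 0 then /2 <= fr (2^p * x) else 1 - fr (2^p*x) >= /2) j :
  (j < p)%nat -> a j (x + s * / 2^(p+2)) - a j x = ex x j * (s * / 2^(p+2)).
Proof.
  intros Hj. apply lin_level.
  destruct (fr_pow_le x (S j) (p - S j)) as [A B].
  replace (S j + (p - S j))%nat with p in A, B by lia.
  assert (E : 2^(p+2) = 2^j * 2^(p - S j) * 8).
  { replace (p+2)%nat with (j + (p - S j) + 3)%nat by lia. rewrite !pow_add. simpl. ring. }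
  pose proof (pow2_pos j). pose proof (pow2_pos (p - S j)).
  set (r := 2^(p - S j)) in *. set (q := 2^j) in *.
  assert (F : q * (s * / 2 ^ (p + 2)) = s / (8 * r)) by (rewrite E; field; lra).
  rewrite F. pose proof (fr_range (2^(S j)*x)).
  assert (0 < / (8*r)) by (apply Rinv_0_lt_compat; lra).
  destruct (Rlt_dec s 0); destruct hs; subst s; try lra.
  - split; [|unfold Rdiv; lra].
    assert (fr (2 ^ S j * x) >= / (2 * r)).
    { apply Rle_ge. apply (Rmult_le_reg_l r); [lra|].
      replace (r * / (2*r)) with (/2) by (field; lra). lra. }
    assert (/ (2*r) = 4 * / (8 * r)) by (field; lra). unfold Rdiv. lra.
  - split; [unfold Rdiv; lra|].
    assert (1 - fr (2 ^ S j * x) >= / (2 * r)).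
    { apply Rle_ge. apply (Rmult_le_reg_l r); [lra|].
      replace (r * / (2*r)) with (/2) by (field; lra). lra. }
    assert (/ (2*r) = 4 * / (8 * r)) by (field; lra). unfold Rdiv. lra.
Qed.

Lemma top_sum x p s (hs : s = 1 \/ s = -1) :
  ex x p = s -> ex x (p+1) = - s ->
  a p (x + s * / 2^(p+2)) - a p x + (a (p+1) (x + s * / 2^(p+2)) - a (p+1) x) = 0.
Proof.
  intros E1 E2. unfold ex, sg in E1, E2.
  set (v := 2^p * x) in *.
  assert (Ev : 2^(p+1) * x = 2 * v) by (unfold v; rewrite pow_add; simpl; ring).
  rewrite Ev, fr2 in E2. unfold a.
  assert (Q : 2^(p+2) = 2^p * 4) by (rewrite pow_add; simpl; ring).
  assert (Q1 : 2^(p+1) = 2^p * 2) by (rewrite pow_add; simpl; ring).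
  pose proof (pow2_pos p).
  assert (A1 : 2^p * (x + s * / 2^(p+2)) = v + s * /4) by (unfold v; rewrite Q; field; lra).
  assert (A2 : 2^(p+1) * (x + s * / 2^(p+2)) = 2 * v + s * /2) by (unfold v; rewrite Q, Q1; field; lra).
  rewrite A1, A2, Ev, Q1.
  destruct hs; subst s.
  - destruct (Rlt_dec (fr v) (/2)) as [l|l]; [|lra].
    destruct (Rlt_dec (2 * fr v) (/2)) as [l2|l2]; [lra|].
    pose proof (top_high v ltac:(lra)).
    replace (v + 1 * /4) with (v + /4) by ring.
    replace (2*v + 1 * /2) with (2*v + /2) by ring.
    apply (Rmult_eq_reg_l (2^p)); [|lra].
    replace (2^p * 0) with 0 by ring. rewrite <- H0. change (2^p*x) with v. field. lra.
  - destruct (Rlt_dec (fr v) (/2)) as [l|l]; [lra|].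
    destruct (Rlt_dec (2 * fr v - 1) (/2)) as [l2|l2]; [|lra].
    assert (fr v < 3/4) by lra.
    pose proof (top_low v ltac:(lra)).
    replace (v + -1 * /4) with (v + - /4) by ring.
    replace (2*v + -1 * /2) with (2*v + - /2) by ring.
    apply (Rmult_eq_reg_l (2^p)); [|lra].
    replace (2^p * 0) with 0 by ring. rewrite <- H1. change (2^p*x) with v. field. lra.
Qed.

Lemma DQ (T : R -> R)
  (hT : forall y : R, infinite_sum (fun n : nat => phi (2 ^ n * y) / 2 ^ n) (T y))
  x p s (hs : s = 1 \/ s = -1) :
  ex x p = s -> ex x (p+1) = - s ->
  diff_quot T x (s * / 2^(p+2)) = sumd (ex x) (p+2).
Proof.
  intros E1 E2. unfold diff_quot.
  set (h := s * / 2^(p+2)).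
  rewrite (T_diff T hT x (x + h) (p+2)) by (intros; apply tail_eq; auto).
  assert (Hf : if Rlt_dec s 0 then /2 <= fr (2^p * x) else 1 - fr (2^p*x) >= /2).
  { unfold ex, sg in E1. destruct (Rlt_dec (fr (2 ^ p * x)) (/2));
    destruct (Rlt_dec s 0); destruct hs; subst s; lra. }
  assert (L : forall k, (k <= p)%nat -> sumd (fun j => a j (x + h) - a j x) k = h * sumd (ex x) k).
  { induction k; intros Hk; simpl. ring. rewrite IHk by lia.
    unfold h; rewrite (low_levels x p s hs Hf k) by lia. ring. }
  replace (p+2)%nat with (S (S p)) by lia. simpl. rewrite L by lia.
  pose proof (top_sum x p s hs E1 E2) as TS. fold h in TS.
  replace (p+1)%nat with (S p) in TS, E2 by lia.
  assert (h <> 0).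
  { unfold h. pose proof (pow2_pos (p+2)). apply Rmult_integral_contrapositive; split.
    destruct hs; lra. apply Rinv_neq_0_compat; lra. }
  rewrite E1, E2.
  replace (h * sumd (ex x) p + (a p (x + h) - a p x) + (a (S p) (x + h) - a (S p) x))
    with (h * sumd (ex x) p) by lra. field. auto.
Qed.

Lemma LF (u : nat -> R) l cc : is_liminf_seq u l ->
  (l = m_infty \/ exists r, l = Finite r /\ r < cc) ->
  forall N, exists n, (n >= N)%nat /\ u n < cc.
Proof.
  intros Hl Hc N. apply NNPP; intro Hn.
  assert (H : forall n, (n >= N)%nat -> u n >= cc).
  { intros n Hn'. destruct (Rlt_dec (u n) cc); [|lra]. exfalso; apply Hn; eauto. }
  set (E := fun r => exists n, (N <= n)%nat /\ r = - u n).
  destruct (completeness E) as [m [Hub Hlub]].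
  { exists (-cc). intros r [n [Hn1 ->]]. specialize (H n Hn1). lra. }
  { exists (- u N). exists N; split; auto. }
  assert (Hm : m <= - cc).
  { apply Hlub. intros r [n [Hn1 ->]]. specialize (H n Hn1). lra. }
  assert (Hinf : is_inf_Rbar (fun z => exists n, (N <= n)%nat /\ z = Finite (u n)) (Finite (- m))).
  { split.
    - intros y [n [Hn1 ->]]. simpl. assert (- u n <= m) by (apply Hub; exists n; auto). lra.
    - intros b Hb. destruct b as [r| |]; simpl.
      + assert (m <= - r).
        { apply Hlub. intros z [n [Hn1 ->]]. specialize (Hb (Finite (u n)) (ex_intro _ n (conj Hn1 eq_refl))).
          simpl in Hb. lra. }
        lra.
      + specialize (Hb (Finite (u N)) (ex_intro _ N (conj (le_n _) eq_refl))). simpl in Hb. auto.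
      + auto. }
  assert (Hle : Rbar_le (Finite (- m)) l) by (apply (proj1 Hl); exists N; auto).
  destruct Hc as [-> | [r [-> Hr]]]; simpl in Hle; lra.
Qed.

Lemma LSF (u : nat -> R) l cc : is_limsup_seq u l ->
  (l = p_infty \/ exists r, l = Finite r /\ cc < r) ->
  forall N, exists n, (n >= N)%nat /\ u n > cc.
Proof.
  intros Hl Hc N. apply NNPP; intro Hn.
  assert (H : forall n, (n >= N)%nat -> u n <= cc).
  { intros n Hn'. destruct (Rle_dec (u n) cc); [auto|]. exfalso; apply Hn. exists n; split; auto; lra. }
  set (E := fun r => exists n, (N <= n)%nat /\ r = u n).
  destruct (completeness E) as [m [Hub Hlub]].
  { exists cc. intros r [n [Hn1 ->]]. apply H; auto. }
  { exists (u N). exists N; split; auto. }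
  assert (Hm : m <= cc).
  { apply Hlub. intros r [n [Hn1 ->]]. apply H; auto. }
  assert (Hsup : is_sup_Rbar (fun z => exists n, (N <= n)%nat /\ z = Finite (u n)) (Finite m)).
  { split.
    - intros y [n [Hn1 ->]]. simpl. apply Hub; exists n; auto.
    - intros b Hb. destruct b as [r| |]; simpl.
      + apply Hlub. intros z [n [Hn1 ->]]. specialize (Hb (Finite (u n)) (ex_intro _ n (conj Hn1 eq_refl))).
        simpl in Hb. lra.
      + auto.
      + specialize (Hb (Finite (u N)) (ex_intro _ N (conj (le_n _) eq_refl))). simpl in Hb. auto. }
  assert (Hle : Rbar_le l (Finite m)) by (apply (proj1 Hl); exists N; auto).
  destruct Hc as [-> | [r [-> Hr]]]; simpl in Hle; lra.
Qed.

Lemma small_pow d : 0 < d -> exists N, forall n, (n >= N)%nat -> / 2^n < d.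
Proof.
  intros Hd. destruct (pow_lt_1_zero (/2)) with (y := d) as [N HN].
  rewrite Rabs_right; lra. auto.
  exists N. intros n Hn. specialize (HN n Hn). rewrite Rabs_right in HN.
  rewrite pow_inv in HN; auto. apply Rle_ge, pow_le; lra.
Qed.

Theorem proposition2p1
  (T : R -> R)
  (hT : forall y : R, infinite_sum (fun n : nat => phi (2 ^ n * y) / 2 ^ n) (T y))
  (x : R) (hx : ~ dyadic x)
  (Gd : nat -> R)
  (hGd : forall n : nat, (1 <= n)%nat -> derivable_pt_lim (G n) x (Gd n))
  (dminus Dplus liminfG limsupG : Rbar)
  (h1 : is_lower_left_dini T x dminus)
  (h2 : is_upper_right_dini T x Dplus)
  (h3 : is_liminf_seq Gd liminfG)
  (h4 : is_limsup_seq Gd limsupG) :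
  Rbar_le dminus (Rbar_plus_R liminfG 1) /\
  Rbar_le (Rbar_plus_R limsupG (-1)) Dplus.
Proof.
  assert (HG : forall n, (1 <= n)%nat -> Gd n = sumd (ex x) n).
  { intros n Hn. exact (uniqueness_limite _ _ _ _ (hGd n Hn) (deriv_G x hx n)). }
  assert (lower_key : forall cc, (forall N, exists n, (n >= N)%nat /\ Gd n < cc) ->
     forall d, 0 < d -> exists h, -d < h < 0 /\ diff_quot T x h < cc + 1).
  { intros cc Hc d Hd.
    assert (Hc' : forall N, exists n, (n >= N)%nat /\ sumd (ex x) n < cc).
    { intros N. destruct (Hc (S N)) as [n [Hn Hn']]. exists n; split; [lia|].
      rewrite <- HG by lia. auto. }
    destruct (small_pow d Hd) as [N0 HN0].
    destruct (LowPat (ex x) (e_pm x) (inf_minus x hx) (inf_plus x) cc Hc' N0) as [p [Hp [E1 [E2 S2]]]].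
    exists (-1 * / 2^(p+2)). specialize (HN0 (p+2)%nat ltac:(lia)).
    pose proof (pow2_pos (p+2)). assert (0 < / 2^(p+2)) by (apply Rinv_0_lt_compat; auto).
    split; [lra|].
    rewrite (DQ T hT x p (-1)); auto. rewrite E2; ring. }
  assert (upper_key : forall cc, (forall N, exists n, (n >= N)%nat /\ Gd n > cc) ->
     forall d, 0 < d -> exists h, 0 < h < d /\ diff_quot T x h > cc - 1).
  { intros cc Hc d Hd.
    assert (Hc' : forall N, exists n, (n >= N)%nat /\ sumd (ex x) n > cc).
    { intros N. destruct (Hc (S N)) as [n [Hn Hn']]. exists n; split; [lia|].
      rewrite <- HG by lia. auto. }
    destruct (small_pow d Hd) as [N0 HN0].
    destruct (HighPat (ex x) (e_pm x) (inf_minus x hx) (inf_plus x) cc Hc' N0) as [p [Hp [E1 [E2 S2]]]].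
    exists (1 * / 2^(p+2)). specialize (HN0 (p+2)%nat ltac:(lia)).
    pose proof (pow2_pos (p+2)). assert (0 < / 2^(p+2)) by (apply Rinv_0_lt_compat; auto).
    split; [lra|].
    rewrite (DQ T hT x p 1); auto. }
  split.
  - destruct liminfG as [L| |].
    + apply (proj2 h1). intros y [d [Hd Hinf]].
      destruct y as [r| |]; simpl; auto.
      * apply Rle_plus_epsilon. intros eps He. assert (HL : L < L + eps) by lra.
        destruct (lower_key (L + eps) (LF Gd _ (L+eps) h3 (or_intror (ex_intro _ L (conj eq_refl HL)))) d Hd)
          as [h [Hh Hq]].
        pose proof (proj1 Hinf (Finite (diff_quot T x h)) (ex_intro _ h (conj Hh eq_refl))).
        simpl in H. lra.
      * assert (HL : L < L + 1) by lra. destruct (lower_key (L + 1) (LF Gd _ (L+1) h3 (or_intror (ex_intro _ L (conj eq_refl HL)))) d Hd)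
          as [h [Hh Hq]].
        exact (proj1 Hinf (Finite (diff_quot T x h)) (ex_intro _ h (conj Hh eq_refl))).
    + destruct dminus; simpl; auto.
    + apply (proj2 h1). intros y [d [Hd Hinf]].
      destruct y as [r| |]; simpl; auto.
      * destruct (lower_key (r - 2) (LF Gd _ _ h3 (or_introl eq_refl)) d Hd) as [h [Hh Hq]].
        pose proof (proj1 Hinf (Finite (diff_quot T x h)) (ex_intro _ h (conj Hh eq_refl))).
        simpl in H. lra.
      * destruct (lower_key 0 (LF Gd _ _ h3 (or_introl eq_refl)) d Hd) as [h [Hh Hq]].
        exact (proj1 Hinf (Finite (diff_quot T x h)) (ex_intro _ h (conj Hh eq_refl))).
  - destruct limsupG as [L| |].
    + apply (proj2 h2). intros y [d [Hd Hsup]].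
      destruct y as [r| |]; simpl; auto.
      * apply Rnot_lt_le. intro Hlt. assert (HL : L - (L - 1 - r) / 2 < L) by lra.
        destruct (upper_key (L - (L - 1 - r) / 2) (LSF Gd _ (L - (L - 1 - r) / 2) h4 (or_intror (ex_intro _ L (conj eq_refl HL)))) d Hd)
          as [h [Hh Hq]].
        pose proof (proj1 Hsup (Finite (diff_quot T x h)) (ex_intro _ h (conj Hh eq_refl))).
        simpl in H. lra.
      * assert (HL : L - 1 < L) by lra. destruct (upper_key (L - 1) (LSF Gd _ (L-1) h4 (or_intror (ex_intro _ L (conj eq_refl HL)))) d Hd)
          as [h [Hh Hq]].
        exact (proj1 Hsup (Finite (diff_quot T x h)) (ex_intro _ h (conj Hh eq_refl))).
    + apply (proj2 h2). intros y [d [Hd Hsup]].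
      destruct y as [r| |]; simpl; auto.
      * destruct (upper_key (r + 2) (LSF Gd _ _ h4 (or_introl eq_refl)) d Hd) as [h [Hh Hq]].
        pose proof (proj1 Hsup (Finite (diff_quot T x h)) (ex_intro _ h (conj Hh eq_refl))).
        simpl in H. lra.
      * destruct (upper_key 0 (LSF Gd _ _ h4 (or_introl eq_refl)) d Hd) as [h [Hh Hq]].
        exact (proj1 Hsup (Finite (diff_quot T x h)) (ex_intro _ h (conj Hh eq_refl))).
    + simpl. auto.
Qed.
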